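(* Assume $p,q\in[0,1]$. For all $n\ge2$, almost surely, $$\widetilde M_n-\widetilde L_n\le Y_n-Z_n\le M_n.$$
   Context: Ulam–Harris labels: $\mathcal U_n=\mathbb N^n$ ($n\ge0$, $\mathcal U_0=\{\emptyset\}$), $\mathcal U=\bigcup_{n\ge0}\mathcal U_n$; for $u=u_1\dots u_k$ write $ui=u_1\dots u_ki$. Let $(\xi_u)_{u\in\mathcal U}$ be i.i.d. Poisson with mean $1+p$, and $(\delta_{u,v})_{u,v\in\mathcal U}$, $(\mu_{\{u,v\}})_{u\ne v\in\mathcal U}$ i.i.d. Bernoulli with mean $q$, all independent. The process $\mathcal G(p,q)=(G_n)_{n\ge0}$, $G_n=(V_n,E_n)$: $G_0=(\{\emptyset\},\emptyset)$, and $I_m=V_m\cap\mathcal U_m$. Given $G_{n-1}$ ($n\ge1$): (1) for $u\in I_{n-1}$ let $\mathcal K_u=\{v\in V_{n-1}:d_{G_{n-1}}(u,v)=3\}$ and $\mathcal C_u=\{j\in\mathbb N:j\le\xi_u,\ \delta_{v,uj}=0\ \forall v\in\mathcal K_u\}$; let $\tilde G_n$ have vertex set $V_{n-1}\cup\{ui:u\in I_{n-1},i\in\mathcal C_u\}$ and edge set $E_{n-1}\cup\{\{u,ui\}:u\in I_{n-1},i\in\mathcal C_u\}$, and $\tilde I_n$ its set of vertices in $\mathcal U_n$. (2) For $u,v\in\tilde I_n$ write $u\overset{m}{\sim}v$ iff $d_{\tilde G_n}(u,v)=4$ and $\mu_{\{u,v\}}=1$; let $\sim$ be the equivalence relation on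 $\tilde I_n$ generated by $\overset m\sim$, and $\pi(u)$ the lexicographically smallest element of the class of $u$. Then $V_n=V_{n-1}\cup\{\pi(u):u\in\tilde I_n\}$, $E_n=E_{n-1}\cup\{\{v,\pi(vi)\}:v\in I_{n-1},i\in\mathcal C_v\}$. Let $Z_n=|I_n|$ and $Y_n=\sum_{u\in I_{n-1}}|\mathcal C_u|=|\tilde I_n|$. For $\tilde u\in\tilde I_n$, $\tilde\alpha(\tilde u)=\{\tilde u\}\cup\bigcup_{1\le j\le n}\{x\in I_{n-j}:d_{\tilde G_n}(x,\tilde u)=j\}$ and $\tilde\alpha_2(\tilde u)=\tilde\alpha(\tilde u)\cap I_{n-2}$; $\tilde J^{(2)}_n=\{\tilde u\in\tilde I_n:|\tilde\alpha_2(\tilde u)|=1\}$. $M_n=|\{\{u,v\}:u,v\in\tilde I_n,\ u\overset m\sim v\}|$, $\widetilde M_n=|\{\{u,v\}:u,v\in\tilde J^{(2)}_n,\ u\overset m\sim v\}|$, and $\widetilde L_n=|\{(u,v,w)\in(\tilde J^{(2)}_n)^3:u\overset m\sim v,\ v\overset m\sim w,\ u\ne w\}|$. *)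

(* Defs.v *)
From HB Require Import structures.
From mathcomp Require Import all_boot all_order all_algebra.
From mathcomp Require Import all_classical all_reals all_analysis.
Set Implicit Arguments. Unset Strict Implicit. Unset Printing Implicit Defensive.
Import Order.TTheory GRing.Theory Num.Theory.

(* A label u = u_1 ... u_k is a sequence of positive naturals; u i = rcons u i. *)
Definition label := seq nat.

Fixpoint lexlt (s t : label) : bool :=
  match s, t with
  | [::], [::] => false
  | [::], _ :: _ => true
  | _ :: _, [::] => false
  | x :: s', y :: t' => (x < y)%N || ((x == y) && lexlt s' t')
  end.

Definition lexmin (a b : label) : label := if lexlt b a then b else a.

Definition graph := (seq label * seq (label * label))%type.

Definition gadj (G : graph) : rel label :=
  fun x y => ((x, y) \in G.2) || ((y, x) \in G.2).

(* vertices of V reachable from x by a path of at most k r-steps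
   (all intermediate/terminal vertices taken in V) *)
Fixpoint rball (V : seq label) (r : rel label) (x : label) (k : nat) : seq label :=
  if k is k'.+1 then
    let B := rball V r x k' in B ++ [seq y <- V | has (fun z => r z y) B]
  else [:: x].

Definition dist_is (G : graph) (x y : label) (k : nat) : bool :=
  if k is k'.+1 then
    (y \in rball G.1 (gadj G) x k) && (y \notin rball G.1 (gadj G) x k')
  else y == x.

Definition level (V : seq label) (m : nat) : seq label :=
  [seq u <- V | size u == m].

Section Process.
(* realization: xi u = xi_u, delta v w = delta_{v,w},
   mu u v = mu_{{u,v}} for u <lex v (unordered pairs are represented by
   their lexicographically ordered version) *)
Variables (xi : label -> nat) (delta : label -> label -> bool)
          (mu : label -> label -> bool).

Definition mupair (u v : label) : bool :=
  if lexlt u v then mu u v else mu v u.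

Definition Kset (G : graph) (u : label) : seq label :=
  [seq v <- G.1 | dist_is G u v 3].

Definition Cset (G : graph) (u : label) : seq nat :=
  [seq j <- iota 1 (xi u) | all (fun v => ~~ delta v (rcons u j)) (Kset G u)].

Definition tildeG (n : nat) (G : graph) : graph :=
  let I := level G.1 n.-1 in
  (G.1 ++ [seq rcons u j | u <- I, j <- Cset G u],
   G.2 ++ [seq (u, rcons u j) | u <- I, j <- Cset G u]).

Definition tildeI (n : nat) (G : graph) : seq label :=
  undup (level (tildeG n G).1 n).

Definition msim (n : nat) (G : graph) (u v : label) : bool :=
  dist_is (tildeG n G) u v 4 && mupair u v.

(* class of u for the equivalence relation generated by ~m on tilde I_n *)
Definition mclass (n : nat) (G : graph) (u : label) : seq label :=
  let It := tildeI n G in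
  rball It (fun a b => msim n G a b || msim n G b a) u (size It).

Definition piu (n : nat) (G : graph) (u : label) : label :=
  foldr lexmin u (mclass n G u).

Definition step (n : nat) (G : graph) : graph :=
  let I := level G.1 n.-1 in
  (undup (G.1 ++ [seq piu n G u | u <- tildeI n G]),
   G.2 ++ [seq (v, piu n G (rcons v i)) | v <- I, i <- Cset G v]).

Fixpoint proc (n : nat) : graph :=
  if n is n'.+1 then step n'.+1 (proc n') else ([:: [::]], [::]).

Definition Iset (m : nat) : seq label := level (proc m).1 m.

Definition Zn (n : nat) : nat := size (undup (Iset n)).

Definition Yn (n : nat) : nat :=
  \sum_(u <- Iset n.-1) size (Cset (proc n.-1) u).

Definition Gt (n : nat) : graph := tildeG n (proc n.-1).
Definition It (n : nat) : seq label := tildeI n (proc n.-1).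
Definition ms (n : nat) (u v : label) : bool := msim n (proc n.-1) u v.

Definition alphat (n : nat) (u : label) : seq label :=
  u :: flatten [seq [seq x <- Iset (n - j) | dist_is (Gt n) x u j]
               | j <- iota 1 n].

Definition alpha2 (n : nat) (u : label) : seq label :=
  undup [seq x <- alphat n u | x \in Iset (n - 2)].

Definition Jt (n : nat) : seq label :=
  [seq u <- It n | size (alpha2 n u) == 1%N].

Definition npairs (n : nat) (s : seq label) : nat :=
  size [seq uv <- [seq (u, v) | u <- s, v <- s]
       | lexlt uv.1 uv.2 && (ms n uv.1 uv.2 || ms n uv.2 uv.1)].

Definition Mn (n : nat) : nat := npairs n (It n).
Definition Mtn (n : nat) : nat := npairs n (Jt n).

Definition Ltn (n : nat) : nat :=
  size [seq t <- flatten [seq [seq (u, v, w) | v <- Jt n, w <- Jt n] | u <- Jt n]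
       | [&& ms n t.1.1 t.1.2, ms n t.1.2 t.2 & t.1.1 != t.2]].

End Process.

Definition lemma5p1_ineq (xi : label -> nat) (delta mu : label -> label -> bool)
  (n : nat) : Prop :=
  ((Mtn xi delta mu n)%:Z - (Ltn xi delta mu n)%:Z
     <= (Yn xi delta mu n)%:Z - (Zn xi delta mu n)%:Z
     <= (Mn xi delta mu n)%:Z)%R.

(* index set of the whole random family: xi_u, delta_{u,v}, mu_{u,v} *)
Definition ridx := ((label + (label * label)) + (label * label))%type.

Definition ridx_valid (i : ridx) : bool :=
  match i with inr (u, v) => lexlt u v | _ => true end.

Definition joint_family (T : Type) (xi : label -> T -> nat)
  (delta mu : label -> label -> T -> bool) (i : ridx) (t : T) : nat :=
  match i with
  | inl (inl u) => xi u t
  | inl (inr (u, v)) => nat_of_bool (delta u v t)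
  | inr (u, v) => nat_of_bool (mu u v t)
  end.

Local Open Scope classical_set_scope.
Local Open Scope ring_scope.

Definition mutually_independent (R : realType) (d : measure_display)
  (T : measurableType d) (P : probability T R) (I : eqType)
  (valid : pred I) (X : I -> T -> nat) : Prop :=
  forall (s : seq I) (k : I -> nat), uniq s -> all valid s ->
    P (\bigcap_(i in [set` s]) [set t | X i t = k i]) =
    (\prod_(i <- s) P [set t | X i t = k i])%E.

Definition model (R : realType) (d : measure_display) (T : measurableType d)
  (P : probability T R) (p q : R) (xi : label -> T -> nat)
  (delta mu : label -> label -> T -> bool) : Prop :=
  [/\ (forall i k, measurable [set t | joint_family xi delta mu i t = k]),
      (forall u k, P [set t | xi u t = k] =
         (expR (- (1 + p)) * (1 + p) ^+ k / (k`!)%:R)%:E),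
      (forall u v, P [set t | delta u v t = true] = q%:E),
      (forall u v, lexlt u v -> P [set t | mu u v t = true] = q%:E)
    & mutually_independent P ridx_valid (joint_family xi delta mu)].

(* Main.v *)
Require Import Defs.
From HB Require Import structures.
From mathcomp Require Import all_boot all_order all_algebra.
From mathcomp Require Import all_classical all_reals all_analysis.
Import Order.TTheory GRing.Theory Num.Theory.
From mathcomp Require Import zify.
Set Implicit Arguments. Unset Strict Implicit. Unset Printing Implicit Defensive.

Lemma lexlt_irr s : lexlt s s = false.
Proof. by elim: s => //= x s ->; rewrite ltnn eqxx. Qed.

Lemma lexlt_trans s t u : lexlt s t -> lexlt t u -> lexlt s u.
Proof.
elim: s t u => [|x s IH] [|y t] [|z u] //=.
case/orP=> [xy|/andP[/eqP <- st]]; case/orP=> [yz|/andP[/eqP <- tu]].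
- by rewrite (ltn_trans xy yz).
- by rewrite xy.
- by rewrite yz.
- by rewrite eqxx (IH _ _ st tu) orbT.
Qed.

Lemma lexlt_asym s t : lexlt s t -> lexlt t s = false.
Proof. by move=> st; apply/negP=> ts; have := lexlt_trans st ts; rewrite lexlt_irr. Qed.

Lemma lexlt_total s t : s != t -> lexlt s t || lexlt t s.
Proof.
elim: s t => [|x s IH] [|y t] //=.
case: (ltngtP x y) => //= xy; rewrite ?eqxx /=.
subst y => st; apply: IH; apply: contra st => /eqP ->. by [].
Qed.

Lemma lexmin_mem a s : foldr lexmin a s \in a :: s.
Proof.
elim: s => [|x s IH] /=; first by rewrite mem_head.
rewrite /lexmin; case: ifP => _.
  by move: IH; rewrite !inE => /orP[->|->]; rewrite ?orbT.
by rewrite !inE eqxx orbT.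
Qed.

Lemma lexmin_min a s y : y \in a :: s -> ~~ lexlt y (foldr lexmin a s).
Proof.
elim: s y => [|x s IH] y /=; first by rewrite inE => /eqP ->; rewrite lexlt_irr.
set m := foldr lexmin a s.
have IH' : forall y, y \in a :: s -> ~~ lexlt y m by exact: IH.
rewrite /lexmin !inE => H.
have {H} H : (y == x) || (y \in a :: s) by rewrite inE; move: H => /or3P[]->; rewrite ?orbT.
case: ifP => mx.
  case/orP: H => [/eqP ->|H]; last exact: IH'.
  by rewrite lexlt_asym.
case/orP: H => [/eqP ->|H]; first by rewrite lexlt_irr.
apply/negP => yx.
have := IH' _ H; rewrite /= => /negP; apply.
case: (eqVneq m x) => [->//|mnx].
case/orP: (lexlt_total mnx); first by rewrite mx.
by move=> xm; apply: lexlt_trans yx xm.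
Qed.

Lemma min_unique (S : pred label) m1 m2 : m1 \in S -> m2 \in S ->
  (forall y, y \in S -> ~~ lexlt y m1) -> (forall y, y \in S -> ~~ lexlt y m2) ->
  m1 = m2.
Proof.
move=> S1 S2 H1 H2; apply/eqP; apply/negPn/negP => ne.
case/orP: (lexlt_total ne) => lt.
  by have := H2 _ S1; rewrite lt.
by have := H1 _ S2; rewrite lt.
Qed.

Lemma pair_ord a b c d : lexlt a b -> lexlt c d ->
  (a = c /\ b = d) \/ (a = d /\ b = c) -> (a, b) = (c, d).
Proof.
move=> ab cd [[-> ->]//|[ad bc]]; subst.
by rewrite lexlt_asym in ab.
Qed.

Section Ball.
Variables (V : seq label) (e : rel label).
Notation ball := (rball V e).

Lemma ballS x k y : (y \in ball x k.+1) =
  (y \in ball x k) || ((y \in V) && has (fun z => e z y) (ball x k)).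
Proof. by rewrite /= mem_cat mem_filter andbC. Qed.

Lemma ball0 x y : (y \in ball x 0) = (y == x).
Proof. by rewrite inE. Qed.

Lemma ball_mono x k l : k <= l -> {subset ball x k <= ball x l}.
Proof.
elim: l => [|l IH]; first by rewrite leqn0 => /eqP ->.
rewrite leq_eqVlt => /orP[/eqP -> //|kl] y yk.
by rewrite ballS (IH kl y yk).
Qed.

Lemma ball_self x k : x \in ball x k.
Proof. by apply: (ball_mono (leq0n k)); rewrite ball0. Qed.

Lemma ball_V x k y : y \in ball x k -> (y == x) || (y \in V).
Proof.
elim: k y => [|k IH] y; first by rewrite ball0 => ->.
by rewrite ballS => /orP[/IH //|/andP[-> _]]; rewrite orbT.
Qed.

Lemma ball_trans x y z a b : y \in ball x a -> z \in ball y b -> z \in ball x (a + b).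
Proof.
move=> yx; elim: b z => [|b IH] z; first by rewrite ball0 addn0 => /eqP ->.
rewrite ballS addnS => /orP[/IH zb|/andP[zV /hasP[w wb ewz]]].
  by rewrite ballS zb.
by rewrite ballS zV; apply/orP; right; apply/hasP; exists w => //; apply: IH.
Qed.

Hypothesis Hs : forall a b, e a b = e b a.

Lemma ball_sym x y a : x \in V -> y \in ball x a -> x \in ball y a.
Proof.
move=> xV; elim: a y => [|a IH] y; first by rewrite !ball0 eq_sym.
rewrite ballS => /orP[/IH H|/andP[yV /hasP[z zb ezy]]].
  exact: (ball_mono (leqnSn a)).
have zV : z \in V by case/orP: (ball_V zb) => [/eqP ->|].
have zy : z \in ball y 1 by rewrite ballS zV /= (Hs y z) ezy /= orbT.
by rewrite -add1n; apply: ball_trans zy (IH _ zb).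
Qed.

Lemma ball_stable x j : {subset ball x j.+1 <= ball x j} ->
  forall m, {subset ball x (j + m) <= ball x j}.
Proof.
move=> st; elim=> [|m IH] y; first by rewrite addn0.
rewrite addnS ballS => /orP[/IH //|/andP[yV /hasP[z zb ezy]]].
apply: st; rewrite ballS yV; apply/orP; right; apply/hasP; exists z => //; exact: IH.
 Qed.

Lemma ball_grow x k : (exists2 j, j <= k & {subset ball x j.+1 <= ball x j})
  \/ k < size (undup (ball x k)).
Proof.
elim: k => [|k [[j jk st]|IH]]; first by right; rewrite /= .
- by left; exists j => //; apply: leqW.
case A: (all (fun y => y \in ball x k) (ball x k.+1)).
  by left; exists k => // y yk; move/allP: A; apply.
right; move/negbT: A; rewrite -has_predC => /hasP[y yk1 /= nyk].
apply: (leq_ltn_trans IH).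
have : size (y :: undup (ball x k)) <= size (undup (ball x k.+1)).
  apply: uniq_leq_size; first by rewrite /= undup_uniq mem_undup nyk.
  move=> z; rewrite inE !mem_undup => /orP[/eqP ->|zk] //.
  exact: (ball_mono (leqnSn k)).
by [].
Qed.

Lemma ball_sat x k : x \in V -> {subset ball x k <= ball x (size V)}.
Proof.
move=> xV.
case: (ball_grow x (size V)) => [[j jN st]|lt]; last first.
  have : size (undup (ball x (size V))) <= size V.
    apply: uniq_leq_size; first exact: undup_uniq.
    by move=> y; rewrite mem_undup => /ball_V /orP[/eqP ->|].
  by rewrite leqNgt lt.
move=> y yk; apply: (ball_mono jN).
case: (leqP k j) => kj; first exact: (ball_mono kj).
by apply: (@ball_stable _ _ st (k - j) y); rewrite subnKC // ltnW.
Qed.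

Definition rep u := foldr lexmin u (ball u (size V)).
Local Notation N := (size V).

Lemma rep_in x : rep x \in ball x N.
Proof.
rewrite /rep; have := lexmin_mem x (ball x N); rewrite inE => /orP[/eqP ->|//].
exact: ball_self.
Qed.

Lemma rep_V x : x \in V -> rep x \in V.
Proof. by move=> xV; case/orP: (ball_V (rep_in x)) => [/eqP ->|]. Qed.

Lemma reach_sym x y : x \in V -> y \in ball x N -> x \in ball y N.
Proof. exact: ball_sym. Qed.

Lemma reach_trans x y z : x \in V -> y \in ball x N -> z \in ball y N -> z \in ball x N.
Proof. by move=> xV yx zy; apply: (ball_sat xV); apply: ball_trans yx zy. Qed.

Lemma rep_eq x y : x \in V -> y \in ball x N -> rep x = rep y.
Proof.
move=> xV yx.
have yV : y \in V by case/orP: (ball_V yx) => [/eqP ->|].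
have cl : forall z, (z \in ball y N) = (z \in ball x N).
  move=> z; apply/idP/idP => H; last first.
    by apply: (reach_trans yV (reach_sym xV yx) H).
  exact: (reach_trans xV yx H).
apply: (@min_unique (mem (ball x N))).
- exact: rep_in.
- by rewrite inE -cl rep_in.
- by move=> z zx; apply: lexmin_min; rewrite inE zx orbT.
- by move=> z zx; apply: lexmin_min; rewrite inE cl zx orbT.
Qed.

Lemma rep_idem x : x \in V -> rep (rep x) = rep x.
Proof. by move=> xV; rewrite -(rep_eq xV (rep_in x)). Qed.

Lemma rep_adj x y : x \in V -> y \in V -> e x y -> rep x = rep y.
Proof.
move=> xV yV exy; apply: rep_eq => //; apply: (ball_sat (k := 1)) => //.
by rewrite ballS yV /= exy /= orbT.
Qed.

Lemma rep_ball x z k : x \in V -> z \in ball (rep x) k -> rep z = rep x.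
Proof.
move=> xV zb; have rV := rep_V xV.
by rewrite -(rep_eq rV (ball_sat rV zb)) rep_idem.
Qed.

Lemma in_ball_rep x : x \in V -> x \in ball (rep x) N.
Proof. by move=> xV; apply: reach_sym => //; apply: rep_in. Qed.


Definition Elist (s : seq label) :=
  [seq uv <- [seq (u, v) | u <- s, v <- s] | lexlt uv.1 uv.2 && e uv.1 uv.2].

Lemma mem_Elist s a b :
  ((a, b) \in Elist s) = [&& a \in s, b \in s, lexlt a b & e a b].
Proof.
rewrite mem_filter /=.
have -> : ((a, b) \in [seq (u, v) | u <- s, v <- s]) = (a \in s) && (b \in s).
  apply/allpairsP/andP => [[[u v] [/= us vs [-> ->]]]|[Ha Hb]]; first by [].
  by exists (a, b).
by rewrite andbC -!andbA.
Qed.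

Lemma Elist_uniq s : uniq s -> uniq (Elist s).
Proof.
move=> us; apply: filter_uniq; apply: allpairs_uniq => //.
by move=> [a b] [c d] _ _ /= [-> ->].
Qed.

Definition depth x := find (fun k => x \in ball (rep x) k) (iota 0 N.+1).

Lemma depth_in x : x \in V -> x \in ball (rep x) (depth x).
Proof.
move=> xV.
have hs : has (fun k => x \in ball (rep x) k) (iota 0 N.+1).
  by apply/hasP; exists N; [rewrite mem_iota /= add0n ltnSn | exact: in_ball_rep].
have := nth_find 0 hs; rewrite nth_iota ?add0n //.
by move: hs; rewrite has_find size_iota.
Qed.

Lemma depth_min x k : x \in V -> x \in ball (rep x) k -> depth x <= k.
Proof.
move=> xV xk; rewrite leqNgt; apply/negP => kd.
have kN : k < N.+1.
  by apply: (leq_trans kd); have := find_size (fun k => x \in ball (rep x) k) (iota 0 N.+1); rewrite size_iota.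
have := before_find 0 kd; rewrite nth_iota // add0n xk. by [].
Qed.

Definition parent x :=
  let B := ball (rep x) (depth x).-1 in nth x B (find (fun z => e z x) B).

Lemma parent_spec x : x \in V -> rep x != x ->
  [/\ parent x \in V, e (parent x) x, rep (parent x) = rep x
    & depth (parent x) < depth x].
Proof.
move=> xV nx; have rV := rep_V xV.
have dpos : 0 < depth x.
  rewrite lt0n; apply/negP => /eqP d0; have := depth_in xV.
  by rewrite d0 ball0 => /eqP xr; rewrite -xr eqxx in nx.
have xin := depth_in xV.
rewrite /parent.
move: xin; case Ed: (depth x) dpos => [//|d] _ /=.
rewrite ballS => /orP[xd|/andP[_ hs]].
  by have := depth_min xV xd; rewrite Ed ltnn.
have pB : nth x (ball (rep x) d) (find (fun z => e z x) (ball (rep x) d)) \in ball (rep x) d.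
  by apply: mem_nth; rewrite -has_find.
have pe := nth_find x hs.
set p := nth x _ _ in pB pe *.
have pV : p \in V by case/orP: (ball_V pB) => [/eqP ->|].
have pr : rep p = rep x := rep_ball xV pB.
split => //.
have := @depth_min p d pV; rewrite pr => /(_ pB).
by rewrite ltnS.
Qed.

Lemma count_fixed : uniq V ->
  size (undup (map rep V)) <= count (fun x => rep x == x) V.
Proof.
move=> uV; rewrite -size_filter; apply: uniq_leq_size; first exact: undup_uniq.
move=> y; rewrite mem_undup => /mapP[x xV ->].
by rewrite mem_filter rep_idem // eqxx rep_V.
Qed.

Lemma fixed_count : uniq V ->
  count (fun x => rep x == x) V <= size (undup (map rep V)).
Proof.
move=> uV; rewrite -size_filter; apply: uniq_leq_size; first exact: filter_uniq.
move=> x; rewrite mem_filter mem_undup => /andP[/eqP E xV]; rewrite -{1}E; exact: map_f.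
Qed.

Lemma T1 : uniq V -> size V - size (undup (map rep V)) <= size (Elist V).
Proof.
move=> uV.
set W := [seq x <- V | rep x != x].
have h1 : size V - size (undup (map rep V)) <= size W.
  have H := fixed_count uV.
  have E := count_predC (fun x => rep x == x) V.
  have E2 : count (predC (fun x => rep x == x)) V = size W.
    by rewrite /W size_filter; apply: eq_count.
  lia.
apply: (leq_trans h1).
pose f x := if lexlt x (parent x) then (x, parent x) else (parent x, x).
rewrite -(size_map f W); apply: uniq_leq_size.
  rewrite map_inj_in_uniq ?filter_uniq // => x y.
  rewrite !mem_filter => /andP[nx xV] /andP[ny yV] E.
  have [_ _ _ dx] := parent_spec xV nx.
  have [_ _ _ dy] := parent_spec yV ny.
  have : (x = y /\ parent x = parent y) \/ (x = parent y /\ parent x = y).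
    by move: E; rewrite /f; case: ifP => _; case: ifP => _ [E1 E2]; [left|right|right|left].
  case=> [[//]|[xp px]].
  by rewrite px in dx; rewrite -xp in dy; have := ltn_trans dx dy; rewrite ltnn.
move=> uv /mapP[x]; rewrite mem_filter => /andP[nx xV] ->.
have [pV pe _ dx] := parent_spec xV nx.
have xp : x != parent x by apply/eqP => E; rewrite -E ltnn in dx.
rewrite /f; case: ifP => lt; rewrite mem_Elist xV pV.
  by rewrite lt Hs pe.
have := lexlt_total xp; rewrite lt /= => ->.
by rewrite pe.
Qed.

Section T2.
Variables (J : seq label) (g : rel label).
Hypotheses (uV : uniq V) (uJ : uniq J) (JV : {subset J <= V})
  (ge : {in J &, forall a b, g a b = e a b}).

Definition Ltr := [seq t <- flatten [seq [seq (u, v, w) | v <- J, w <- J] | u <- J]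
       | [&& g t.1.1 t.1.2, g t.1.2 t.2 & t.1.1 != t.2]].

Lemma mem_trip u v w : u \in J -> v \in J -> w \in J ->
  (u, v, w) \in flatten [seq [seq (u, v, w) | v <- J, w <- J] | u <- J].
Proof.
move=> uJ' vJ wJ; apply/flatten_mapP; exists u => //.
exact: (allpairs_f (fun v w => (u, v, w))).
Qed.

Definition h1 uv := has (fun w => e uv.1 w && (w != uv.2)) J.
Definition h2 uv := has (fun w => e uv.2 w && (w != uv.1)) J.
Definition iso uv := ~~ h1 uv && ~~ h2 uv.

Lemma iso_other a b y : iso (a, b) -> y \in J -> (e a y -> y = b) /\ (e b y -> y = a).
Proof.
rewrite /iso /h1 /h2 /= => /andP[/hasPn H1 /hasPn H2] yJ; split => E.
  by have := H1 _ yJ; rewrite E /= negbK => /eqP.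
by have := H2 _ yJ; rewrite E /= negbK => /eqP.
Qed.

Lemma T2 : size (Elist J) <= size Ltr + (size V - size (undup (map rep V))).
Proof.
have uE := Elist_uniq uJ.
have E0 := count_predC iso (Elist J).
have Hfix := count_fixed uV.
have Ec := count_predC (fun x => rep x == x) V.
have Hn : count (predC iso) (Elist J) <= size Ltr.
  pose gm uv := if h1 uv then (uv.2, uv.1, nth uv.1 J (find (fun w => e uv.1 w && (w != uv.2)) J))
                else (uv.1, uv.2, nth uv.2 J (find (fun w => e uv.2 w && (w != uv.1)) J)).
  rewrite -size_filter -(size_map gm); apply: uniq_leq_size.
    rewrite map_inj_in_uniq; [exact: filter_uniq|] => -[a b] [c d].
    rewrite !(mem_filter (predC iso)) !mem_Elist => /andP[_ /and4P[_ _ lab _]] /andP[_ /and4P[_ _ lcd _]].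
    rewrite /gm /= => E; apply: pair_ord => //.
    by move: E; case: ifP => _; case: ifP => _ [E1 E2 _]; subst;
      first [by left; split | by right; split].
  move=> t /mapP[[a b]]; rewrite mem_filter mem_Elist => /andP[ni /and4P[aJ bJ lab eab]] ->.
  rewrite /gm /=; case: ifP => H1.
    have wJ : nth a J (find (fun w => e a w && (w != b)) J) \in J by apply: mem_nth; rewrite -has_find.
    have := nth_find a H1; set w := nth a J _ in wJ * => /andP[eaw wb].
    rewrite mem_filter mem_trip //= ge // Hs eab ge // eaw /=.
    by rewrite andbT eq_sym.
  have H2 : h2 (a, b) by move: ni; rewrite /= /iso H1 /=; case: (h2 (a, b)).
  have wJ : nth b J (find (fun w => e b w && (w != a)) J) \in J by apply: mem_nth; move: H2; rewrite /h2 has_find.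
  have := nth_find b H2; set w := nth b J _ in wJ * => /andP[ebw wa].
  rewrite mem_filter mem_trip //= ge // eab ge // ebw /=.
  by rewrite andbT eq_sym.
have Hi : count iso (Elist J) <= count (predC (fun x => rep x == x)) V.
  pose hm uv := if rep uv.1 != uv.1 then uv.1 else uv.2.
  rewrite -!size_filter -(size_map hm); apply: uniq_leq_size.
    rewrite map_inj_in_uniq; [exact: filter_uniq|] => -[a b] [c d].
    rewrite !(mem_filter iso) !mem_Elist => /andP[ia /and4P[aJ bJ lab eab]] /andP[ic /and4P[cJ dJ lcd ecd]] E.
    have hx1 : (hm (a, b) == a) || (hm (a, b) == b) by rewrite /hm; case: ifP => _; rewrite eqxx ?orbT.
    have hx2 : (hm (c, d) == c) || (hm (c, d) == d) by rewrite /hm; case: ifP => _; rewrite eqxx ?orbT.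
    move: hx1 hx2; rewrite E; move: (hm (c, d)) => x.
    move=> hx1 hx2; apply: pair_ord => //.
    case/orP: hx1 => /eqP xa; case/orP: hx2 => /eqP xc; subst x.
    - subst c; left; split => //; exact/esym/((iso_other ia dJ).1 ecd).
    - subst d; right; split => //; rewrite Hs in ecd; exact/esym/((iso_other ia cJ).1 ecd).
    - subst c; right; split => //; exact/esym/((iso_other ia dJ).2 ecd).
    - subst d; left; split => //; rewrite Hs in ecd; exact/esym/((iso_other ia cJ).2 ecd).
  move=> x /mapP[[a b]]; rewrite mem_filter mem_Elist => /andP[ia /and4P[aJ bJ lab eab]] ->.
  rewrite /hm /=; case: ifP => ra; rewrite mem_filter /=.
    by rewrite ra JV.
  rewrite JV // andbT.
  move/negbFE: ra => /eqP ra.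
  rewrite -(rep_adj (JV aJ) (JV bJ) eab) ra.
  by apply/eqP => ab; rewrite ab lexlt_irr in lab.
have : size (Elist J) = count iso (Elist J) + count (predC iso) (Elist J) by rewrite E0.
lia.
Qed.

End T2.

End Ball.

Lemma ball_symE V (e : rel label) (Hs : forall a b, e a b = e b a) x y k :
  x \in V -> y \in V -> (y \in rball V e x k) = (x \in rball V e y k).
Proof.
move=> xV yV; apply/idP/idP; exact: ball_sym.
Qed.

Lemma undup_size_eq (s t : seq label) : s =i t -> size (undup s) = size (undup t).
Proof.
move=> st; apply/anti_leq/andP; split; apply: uniq_leq_size; rewrite ?undup_uniq //.
  by move=> x; rewrite !mem_undup st.
by move=> x; rewrite !mem_undup st.
Qed.

Lemma level_mem (V : seq label) m x : (x \in level V m) = (x \in V) && (size x == m).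
Proof. by rewrite mem_filter andbC. Qed.

Lemma mupair_sym (mu : label -> label -> bool) u v : mupair mu u v = mupair mu v u.
Proof.
rewrite /mupair; case: (eqVneq u v) => [->//|neq].
by case/orP: (lexlt_total neq) => lt; rewrite lt (lexlt_asym lt).
Qed.

Section Proc.
Variables (xi : label -> nat) (delta mu : label -> label -> bool).

Definition ee n G := fun a b => msim xi delta mu n G a b || msim xi delta mu n G b a.

Lemma ee_sym n G a b : ee n G a b = ee n G b a.
Proof. by rewrite /ee orbC. Qed.

Lemma piuE n G u : piu xi delta mu n G u = rep (tildeI xi delta n G) (ee n G) u.
Proof. by []. Qed.

Lemma tildeI_size n G x : x \in tildeI xi delta n G -> size x = n.
Proof. by rewrite mem_undup level_mem => /andP[_ /eqP]. Qed.

Lemma proc_prop m : uniq (proc xi delta mu m).1 /\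
  (forall u, u \in (proc xi delta mu m).1 -> size u <= m).
Proof.
elim: m => [|m [_ IH]]; first by split => // u; rewrite inE => /eqP ->.
split; first exact: undup_uniq.
move=> u; rewrite /= mem_undup mem_cat => /orP[/IH /leqW //|/mapP[w wI ->]].
by rewrite piuE (tildeI_size (rep_V _ wI)).
Qed.

Lemma msim_sym n G a b : a \in tildeI xi delta n G -> b \in tildeI xi delta n G ->
  msim xi delta mu n G a b = msim xi delta mu n G b a.
Proof.
move=> aI bI; rewrite /msim mupair_sym; congr (_ && _).
have inG : forall x, x \in tildeI xi delta n G -> x \in (tildeG xi delta n G).1.
  by move=> x; rewrite mem_undup level_mem => /andP[].
have Hs : forall x y, gadj (tildeG xi delta n G) x y = gadj (tildeG xi delta n G) y x.
  by move=> x y; rewrite /gadj orbC.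
rewrite /dist_is.
by rewrite (@ball_symE _ _ Hs a b 4 (inG _ aI) (inG _ bI)) (@ball_symE _ _ Hs a b 3 (inG _ aI) (inG _ bI)).
Qed.

Theorem det n : (2 <= n)%N -> lemma5p1_ineq xi delta mu n.
Proof.
case: n => [|n'] // Hn.
set G := proc xi delta mu n'.
set V := tildeI xi delta n'.+1 G.
set e := ee n'.+1 G.
have Hs : forall a b, e a b = e b a by move=> a b; apply: ee_sym.
have [uG szG] := proc_prop n'.
have uV : uniq V by apply: undup_uniq.
have EY : Yn xi delta mu n'.+1 = size V.
  set I := level G.1 n'.
  set ch := [seq rcons u j | u <- I, j <- Cset xi delta G u].
  have sch : size ch = Yn xi delta mu n'.+1.
    by rewrite /ch size_allpairs_dep sumnE big_map.
  have uch : uniq ch.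
    apply: allpairs_uniq_dep.
    - exact: filter_uniq.
    - by move=> u _; apply: filter_uniq; apply: iota_uniq.
    - move=> [u j] [u' j'] _ _ /= /rcons_inj [E1 E2]; subst u'.
      by rewrite E2.
  have Vch : V =i ch.
    move=> x; rewrite /V /tildeI mem_undup level_mem /= mem_cat.
    apply/idP/idP.
      case/andP => /orP[/szG xs /eqP xn|//]; by rewrite xn ltnn in xs.
    move=> xch; rewrite xch orbT /=.
    case/allpairsPdep: xch => u [j [uI _ ->]].
    by move: uI; rewrite level_mem size_rcons => /andP[_ /eqP ->].
  rewrite -sch; apply/anti_leq/andP; split; apply: uniq_leq_size => // x; by rewrite Vch.
have EZ : Zn xi delta mu n'.+1 = size (undup (map (rep V e) V)).
  rewrite /Zn /Iset; apply: undup_size_eq => x.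
  rewrite level_mem /= mem_undup mem_cat.
  apply/idP/idP.
    case/andP => /orP[/szG xs /eqP xn|//]; by rewrite xn ltnn in xs.
  move=> xm; rewrite xm orbT /=.
  case/mapP: xm => w wV ->.
  by rewrite (tildeI_size (rep_V _ wV)).
have EM : Mn xi delta mu n'.+1 = size (Elist e V) by [].
have EMt : Mtn xi delta mu n'.+1 = size (Elist e (Jt xi delta mu n'.+1)) by [].
have EL : Ltn xi delta mu n'.+1 = size (Ltr (Jt xi delta mu n'.+1) (msim xi delta mu n'.+1 G)) by [].
have JV : {subset Jt xi delta mu n'.+1 <= V} by move=> x; rewrite mem_filter => /andP[].
have uJ : uniq (Jt xi delta mu n'.+1) by apply: filter_uniq.
have ge : {in Jt xi delta mu n'.+1 &, forall a b, msim xi delta mu n'.+1 G a b = e a b}.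
  move=> a b aJ bJ; rewrite /e /ee (msim_sym (JV _ aJ) (JV _ bJ)).
  by rewrite orbb.
have h1 := T1 Hs uV.
have h2 := T2 Hs uV uJ JV ge.
have h3 : (size (undup (map (rep V e) V)) <= size V)%N.
  by apply: (leq_trans (size_undup _)); rewrite size_map.
rewrite /lemma5p1_ineq EY EZ EM EMt EL.
apply/andP; split; lia.
Qed.

End Proc.

Local Open Scope ring_scope.

Theorem lemma5p1 (R : realType) (d : measure_display) (T : measurableType d)
  (P : probability T R) (p q : R)
  (xi : label -> T -> nat) (delta mu : label -> label -> T -> bool) :
  0 <= p <= 1 -> 0 <= q <= 1 ->
  model P p q xi delta mu ->
  forall n : nat, (2 <= n)%N ->
  {ae P, forall t, lemma5p1_ineq (fun u => xi u t) (fun u v => delta u v t)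
                                 (fun u v => mu u v t) n}.
Proof.
move=> _ _ _ n Hn; apply: aeW => t; exact: det.
Qed.
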